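(* Let $L\in\mathbb{R}^{m\times m}$ satisfy $\|\mathrm{e}^{\omega L}\|_\infty\le 1$ for all $\omega>0$. Let $\rho>0$ and let $f:[-\rho,\rho]\to\mathbb{R}$ (acting componentwise on vectors) satisfy (F+) there exists $\omega_0^+>0$ such that $|\xi+\omega f(\xi)|\le\rho$ for all $\xi\in[-\rho,\rho]$ and all $\omega\in(0,\omega_0^+]$; (F$-$) there exists $\omega_0^->0$ such that $|\xi-\omega f(\xi)|\le\rho$ for all $\xi\in[-\rho,\rho]$ and all $\omega\in(0,\omega_0^-]$. Consider the $s$-stage IFRK step $$u^{(0)}=u^n,\qquad u^{(i)}=\sum_{j=0}^{i-1}\mathrm{e}^{(c_i-c_j)\tau L}\big[\alpha_{ij}u^{(j)}+\tau\beta_{ij}f(u^{(j)})\big],\ 1\le i\le s,\qquad u^{n+1}=u^{(s)},$$ where the coefficients satisfy $\alpha_{ij}\ge 0$, $\sum_{j=0}^{i-1}\alpha_{ij}=1$ for each $i$, $\beta_{ij}=0$ whenever $\alpha_{ij}=0$, and the abscissas are non-decreasing: $c_0\le c_1\le\cdots\le c_s$. Suppose $\|u^n\|_\infty\le\rho$. If all $\beta_{ij}\ge 0$ and $$\tau\le \mathcal{C}\,\omega_0^+,\qquad \mathcal{C}=\min_{(i,j):\,\beta_{ij}>0}\frac{\alpha_{ij}}{\beta_{ij}},$$ or if some $\beta_{ij}<0$ and $$\tau\le \mathcal{C}\,\min\{\omega_0^+,\omega_0^-\},\qquad \mathcal{C}=\min_{(i,j):\,\beta_{ij}\neq 0}\frac{\alpha_{ij}}{|\beta_{ij}|},$$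 then $\|u^{(i)}\|_\infty\le\rho$ for all $i$, and in particular $\|u^{n+1}\|_\infty\le\rho$.
   Context: $\|\cdot\|_\infty$ denotes the vector $\infty$-norm on $\mathbb{R}^m$ and the induced matrix norm. For $u\in\mathbb{R}^m$, $f(u)$ denotes the vector with components $f(u_j)$. $\tau>0$ is the time step size. This step discretizes the ODE system $\frac{du}{dt}=Lu+f(u)$. *)

(* Defs.v *)
From HB Require Import structures.
From mathcomp Require Import all_boot all_order all_algebra.
From mathcomp Require Import all_classical all_reals all_analysis.
Set Implicit Arguments. Unset Strict Implicit. Unset Printing Implicit Defensive.
Import Order.TTheory GRing.Theory Num.Theory.
Local Open Scope ring_scope.

Section Defs.
Variable R : realType.

Definition mxpow (m : nat) (A : 'M[R]_m) (k : nat) : 'M[R]_m :=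
  iter k (mulmx A) 1%:M.

Definition expm (m : nat) (A : 'M[R]_m) : 'M[R]_m :=
  \matrix_(i, j) limn (fun n => \sum_(k < n) (mxpow A k) i j / (k`!)%:R).

Definition vnorm_inf (m : nat) (v : 'cV[R]_m) : R :=
  \big[Num.max/0]_(i < m) `|v i 0|.

Definition mnorm_inf (m : nat) (A : 'M[R]_m) : R :=
  sup [set vnorm_inf (A *m v) | v in [set v : 'cV[R]_m | vnorm_inf v <= 1]].

Definition fvec (f : R -> R) (m : nat) (v : 'cV[R]_m) : 'cV[R]_m := map_mx f v.

(* C = min over (i,j), 1<=i<=s, 0<=j<i, with P (beta i j), of alpha_ij/|beta_ij|
   (in the extended reals; the empty minimum is +oo) *)
Definition Cconst (s : nat) (alpha beta : nat -> nat -> R) (P : R -> bool) : \bar R :=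
  \big[Order.min/+oo%E]_(i < s.+1)
     \big[Order.min/+oo%E]_(j < i | P (beta i j)) ((alpha i j / `|beta i j|)%:E).

Definition IFRK_stages (m s : nat) (L : 'M[R]_m) (f : R -> R) (tau : R)
  (alpha beta : nat -> nat -> R) (c : nat -> R) (un : 'cV[R]_m)
  (u : nat -> 'cV[R]_m) : Prop :=
  u 0%N = un /\
  forall i, (1 <= i <= s)%N ->
    u i = \sum_(j < i)
            expm (((c i - c j) * tau) *: L) *m
              (alpha i j *: u j + (tau * beta i j) *: fvec f (u j)).
End Defs.

(* Main.v *)
Require Import Defs.
From HB Require Import structures.
From mathcomp Require Import all_boot all_order all_algebra.
From mathcomp Require Import all_classical all_reals all_analysis.
Import Order.TTheory GRing.Theory Num.Theory.
Import numFieldNormedType.Exports.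
Local Open Scope ring_scope.
Set Implicit Arguments. Unset Strict Implicit.


Lemma vnorm_le (R : realType) m (v : 'cV[R]_m) r : 0 <= r -> (forall i, `|v i 0| <= r) -> vnorm_inf v <= r.
Proof. by move=> r0 H; rewrite /vnorm_inf; apply: bigmax_le. Qed.

Lemma vnorm_ge (R : realType) m (v : 'cV[R]_m) i : `|v i 0| <= vnorm_inf v.
Proof. by rewrite /vnorm_inf; exact: le_bigmax. Qed.

Lemma mnorm_ub (R : realType) m (A : 'M[R]_m) v : vnorm_inf v <= 1 -> vnorm_inf (A *m v) <= mnorm_inf A.
Proof.
move=> hv; rewrite /mnorm_inf; apply: ub_le_sup; last by exists v.
exists (\sum_i \sum_j `|A i j|) => _ [w /= hw <-].
apply: vnorm_le; first by apply: sumr_ge0 => i _; apply: sumr_ge0.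
move=> i; rewrite mxE.

apply: (le_trans (ler_norm_sum _ _ _)).
apply: (@le_trans _ _ (\sum_j `|A i j|)).
  apply: ler_sum => j _; rewrite normrM -[X in _ <= X]mulr1 ler_wpM2l //.
  exact: (le_trans (vnorm_ge w j) hw).
rewrite [X in _ <= X](bigD1 i) //= lerDl; by apply: sumr_ge0 => k _; apply: sumr_ge0.
Qed.

Lemma mnorm_comp (R : realType) m (A : 'M[R]_m) (x : 'cV[R]_m) (r : R) : mnorm_inf A <= 1 -> 0 <= r ->
  (forall k, `|x k 0| <= r) -> forall k, `|(A *m x) k 0| <= r.
Proof.
move=> hA r0 hx k.
have [r0e|rp] := eqVneq r 0.
  subst r.
  have -> : x = 0.
    apply/matrixP => a b; rewrite ord1 mxE; apply/eqP; rewrite -normr_le0; exact: hx.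
  by rewrite mulmx0 mxE normr0.
have rpos : 0 < r by rewrite lt_def rp r0.
have hx' : vnorm_inf (r^-1 *: x) <= 1.
  apply: vnorm_le => // i; rewrite mxE normrM ger0_norm ?invr_ge0 //.
  by rewrite ler_pdivrMl // mulr1.
have := le_trans (mnorm_ub A hx') hA.
move/(le_trans (vnorm_ge _ k)) => H.
have -> : A *m x = r *: (A *m (r^-1 *: x)) by rewrite -scalemxAr scalerA mulfV // scale1r.
by rewrite mxE normrM ger0_norm // -[X in _ <= X]mulr1 ler_wpM2l.
Qed.


Lemma expm0 (R : realType) m (L : 'M[R]_m) : expm (0 *: L) = 1%:M.
Proof.
apply/matrixP => i j; rewrite mxE.
apply: (@cvg_lim R^o).
  exact: norm_hausdorff.
apply: cvg_near_cst; exists 1%N => // n /= hn.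
case: n hn => // n _.
rewrite big_ord_recl /= big1 ?addr0; first by rewrite /mxpow /= divr1.
by move=> k _; rewrite /mxpow /= scale0r mul0mx mxE mul0r.
Qed.

Lemma mnorm1 (R : realType) m : mnorm_inf (1%:M : 'M[R]_m) <= 1.
Proof.
rewrite /mnorm_inf; apply: ge_sup.
  by exists (vnorm_inf (1%:M *m (0 : 'cV[R]_m))), 0 => //=; apply: vnorm_le => // i; rewrite mxE normr0.
by move=> _ [v /= hv <-]; rewrite mul1mx.
Qed.

Lemma Cconst_le (R : realType) s (alpha beta : nat -> nat -> R) (P : R -> bool) i j :
  (i <= s)%N -> (j < i)%N -> P (beta i j) ->
  (Cconst s alpha beta P <= (alpha i j / `|beta i j|)%:E)%E.
Proof.
move=> hi hj hP; rewrite /Cconst.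
have hi' : (i < s.+1)%N by [].
apply: le_trans; first exact: (bigmin_le _ (Ordinal hi')).
exact: (@bigmin_le_cond _ _ _ _ (Ordinal hj) _ _ hP).
Qed.

Unset Implicit Arguments. Set Strict Implicit.
Theorem theorem3p1 (R : realType) (m s : nat) (L : 'M[R]_m)
  (rho : R) (f : R -> R) (w0p w0m tau : R)
  (alpha beta : nat -> nat -> R) (c : nat -> R)
  (un : 'cV[R]_m) (u : nat -> 'cV[R]_m) :
  (forall w : R, 0 < w -> mnorm_inf (expm (w *: L)) <= 1) ->
  0 < rho ->
  0 < w0p ->
  (forall xi w : R, -rho <= xi <= rho -> 0 < w <= w0p -> `|xi + w * f xi| <= rho) ->
  0 < w0m ->
  (forall xi w : R, -rho <= xi <= rho -> 0 < w <= w0m -> `|xi - w * f xi| <= rho) ->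
  0 < tau ->
  (forall i j, (1 <= i <= s)%N -> (j < i)%N -> 0 <= alpha i j) ->
  (forall i, (1 <= i <= s)%N -> \sum_(j < i) alpha i j = 1) ->
  (forall i j, (1 <= i <= s)%N -> (j < i)%N -> alpha i j = 0 -> beta i j = 0) ->
  (forall i, (i < s)%N -> c i <= c i.+1) ->
  @IFRK_stages R m s L f tau alpha beta c un u ->
  vnorm_inf un <= rho ->
  ((forall i j, (1 <= i <= s)%N -> (j < i)%N -> 0 <= beta i j) /\
     (tau%:E <= Cconst s alpha beta (fun b : R => (0 < b)%R) * w0p%:E)%E
   \/
   (exists i j, [/\ (1 <= i <= s)%N, (j < i)%N & beta i j < 0]) /\
     (tau%:E <= Cconst s alpha beta (fun b : R => (b != 0)%R) * (Num.min w0p w0m)%:E)%E) ->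
  forall i, (i <= s)%N -> vnorm_inf (u i) <= rho.
Proof.
move=> hL rho0 wp0 Hp wm0 Hm tau0 a0 asum ab0 cinc [u0 ustep] hun Hcase.
have cmono : forall j i, (j <= i)%N -> (i <= s)%N -> c j <= c i.
  move=> j; elim=> [|i IH] hji his.
    by move: hji; rewrite leqn0 => /eqP ->.
  move: hji; rewrite leq_eqVlt => /orP [/eqP -> //|hji].
  apply: le_trans (IH hji (ltnW his)) (cinc _ his).
have key : forall i j xi, (1 <= i <= s)%N -> (j < i)%N -> `|xi| <= rho ->
    `|alpha i j * xi + tau * beta i j * f xi| <= alpha i j * rho.
  move=> i j xi hi hj hxi.
  have hai := a0 i j hi hj.
  have [ha0|hapos] := eqVneq (alpha i j) 0.
    by rewrite ha0 (ab0 i j hi hj ha0) mulr0 !mul0r addr0 normr0.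
  have apos : 0 < alpha i j by rewrite lt_def hapos hai.
  have his : (i <= s)%N by case/andP: hi.
  have bnd : forall W (P : R -> bool), 0 <= W -> P (beta i j) ->
      (tau%:E <= Cconst s alpha beta P * W%:E)%E -> tau * `|beta i j| / alpha i j <= W.
    move=> W P W0 hP ht.
    have W0E : (0 <= W%:E)%E by rewrite lee_fin.
    have := le_trans ht (lee_wpmul2r W0E ((@Cconst_le _ s alpha beta P i j his hj hP))).
    rewrite -EFinM lee_fin => hle.
    have [b0|bn0] := eqVneq (beta i j) 0.
      by rewrite b0 normr0 mulr0 mul0r.
    have bpos : 0 < `|beta i j| by rewrite normr_gt0.
    rewrite ler_pdivrMr //.
    apply: le_trans (ler_wpM2r (ltW bpos) hle) _.
    by rewrite mulrAC divfK ?gt_eqF // mulrC.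
  have -> : alpha i j * xi + tau * beta i j * f xi =
            alpha i j * (xi + (tau * beta i j / alpha i j) * f xi).
    by rewrite mulrDr mulrA [alpha i j * (_ / _)]mulrC divfK // mulrC.
  rewrite normrM ger0_norm // ler_wpM2l //.
  have hxi' : - rho <= xi <= rho by rewrite -ler_norml.
  have [bz|bpos|bneg] := ltgtP (beta i j) 0.
  -
    have W0 : 0 <= Num.min w0p w0m by rewrite le_min !ltW.
    case: Hcase => [[hb _]|[_ ht]].
      by have := hb i j hi hj; rewrite leNgt bz.
    have := bnd _ (fun b => b != 0) W0 (negbT (lt_eqF bz)) ht.
    rewrite (ltr0_norm bz) => hw.
    have -> : xi + tau * beta i j / alpha i j * f xi = xi - (tau * - beta i j / alpha i j) * f xi.
      by rewrite mulrN mulNr mulNr opprK.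
    apply: Hm => //; apply/andP; split.
      by rewrite divr_gt0 // mulr_gt0 // oppr_gt0.
    by apply: le_trans hw _; rewrite ge_min lexx orbT.
  -
    have W0 : 0 <= Num.min w0p w0m by rewrite le_min !ltW.
    apply: Hp => //; apply/andP; split.
      by rewrite divr_gt0 // mulr_gt0.
    case: Hcase => [[_ ht]|[_ ht]].
      by move: (bnd _ (fun b => 0 < b) (ltW wp0) bpos ht); rewrite (gtr0_norm bpos).
    move: (bnd _ (fun b => b != 0) W0 (negbT (gt_eqF bpos)) ht); rewrite (gtr0_norm bpos) => hw.
    by apply: le_trans hw _; rewrite ge_min lexx.
  - by rewrite bneg mulr0 mul0r mul0r addr0.
have main : forall i, (i <= s)%N -> forall k, `|u i k 0| <= rho.
  elim/ltn_ind => i IH his k.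
  case: i IH his => [|i] IH his.
    by rewrite u0; apply: le_trans (vnorm_ge _ k) hun.
  have hi : (1 <= i.+1 <= s)%N by rewrite his.
  rewrite (ustep _ hi) summxE.
  apply: le_trans; first exact: ler_norm_sum.
  apply: (@le_trans _ _ (\sum_(j < i.+1) alpha i.+1 j * rho)); last first.
    by rewrite -mulr_suml asum // mul1r.
  apply: ler_sum => j _.
  have hj : (j < i.+1)%N := ltn_ord j.
  apply: mnorm_comp.
  - have [ce|cne] := eqVneq (c i.+1 - c j) 0.
      by rewrite ce mul0r expm0 mnorm1.
    apply: hL; rewrite mulr_gt0 // lt_def cne subr_ge0 cmono //.
    exact: ltnW.
  - by rewrite mulr_ge0 // ?(a0 _ _ hi hj) // ltW.
  - move=> k'; rewrite !mxE.
    apply: key => //.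
    apply: IH => //; exact: leq_trans (ltnW hj) his.
move=> i his; apply: vnorm_le; first exact: ltW.
exact: main.
Qed.
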